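(* Let $\mathbb{A}_1\subseteq\cdots\subseteq\mathbb{A}_k$ be a flag of linear subspaces of $\mathbb{R}^n$, $\mathbb{B}\in\Omega(\mathbb{A}_1,\dots,\mathbb{A}_k)$ and $b\in\mathbb{R}^n$. Then the fiber \[ \tau_b^{-1}(\mathbb{B})=\{\mathbb{B}+c\in\mathrm{Graff}(k,n):\dim((\mathbb{B}+c)\cap(\mathbb{A}_j+b))\ge j,\ j=1,\dots,k\} \] is convex (under the identification of the affine subspaces with direction space $\mathbb{B}$ with the quotient vector space $\mathbb{R}^n/\mathbb{B}$ via $\mathbb{B}+c\mapsto c+\mathbb{B}$), and therefore contractible.
   Context: $\mathrm{Graff}(k,n)$ is the set of $k$-dimensional affine subspaces of $\mathbb{R}^n$. $\Omega(\mathbb{A}_1,\dots,\mathbb{A}_k)=\{\mathbb{B}\in\mathrm{Gr}(k,n):\dim(\mathbb{B}\cap\mathbb{A}_j)\ge j,\ j=1,\dots,k\}$. $\tau_b$ is the restriction of $\mathbb{A}+c\mapsto\mathbb{A}$ to the affine Schubert variety $\Psi(\mathbb{A}_1+b,\dots,\mathbb{A}_k+b)=\{\mathbb{B}+c\in\mathrm{Graff}(k,n):\dim((\mathbb{B}+c)\cap(\mathbb{A}_j+b))\ge j,\ j=1,\dots,k\}$, with values in $\Omega(\mathbb{A}_1,\dots,\mathbb{A}_k)$. *)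

(* Defs.v *)
(* R^n is 'rV[R]_n for R : realType (mathcomp-analysis reals). *)
From HB Require Import structures.
From mathcomp Require Import all_boot all_order all_algebra.
From mathcomp Require Import reals.
Set Implicit Arguments. Unset Strict Implicit. Unset Printing Implicit Defensive.
Import Order.TTheory GRing.Theory Num.Theory.
Local Open Scope ring_scope.

(* The empty set has dimension -1 by convention, so it never
   satisfies [affine_dim_ge S m] (we only use m >= 1). *)
Definition affine_dim_ge (F : fieldType) (V : vectType F) (S : V -> Prop)
    (m : nat) : Prop :=
  exists p : V, S p /\
    exists W : {vspace V}, (forall x, S x <-> (x - p \in W)) /\ (m <= \dim W)%N.

Definition translate (F : fieldType) (V : vectType F) (U : {vspace V}) (a : V)
  : V -> Prop := fun x => x - a \in U.

Definition setI_pred (V : Type) (S T : V -> Prop) : V -> Prop :=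
  fun x => S x /\ T x.

(* Main.v *)
Require Import Defs.
From HB Require Import structures.
From mathcomp Require Import all_boot all_order all_algebra.
From mathcomp Require Import reals.
Import Order.TTheory GRing.Theory Num.Theory.
Local Open Scope ring_scope.

Lemma key_adg (F : fieldType) (V : vectType F) (B A : {vspace V}) (c b p : V)
  (m : nat) : p - c \in B -> p - b \in A -> (m <= \dim (B :&: A))%N ->
  affine_dim_ge (setI_pred (translate B c) (translate A b)) m.
Proof.
move=> hc hb hm; exists p; split; first by split.
exists (B :&: A)%VS; split => // x; rewrite memv_cap /setI_pred /translate.
split.
- case=> h1 h2; apply/andP; split.
  + have -> : x - p = (x - c) - (p - c) by rewrite opprB addrA subrK.
    exact: rpredB.
  + have -> : x - p = (x - b) - (p - b) by rewrite opprB addrA subrK.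
    exact: rpredB.
- case/andP=> h1 h2; split.
  + have -> : x - c = (x - p) + (p - c) by rewrite addrA subrK.
    exact: rpredD.
  + have -> : x - b = (x - p) + (p - b) by rewrite addrA subrK.
    exact: rpredD.
Qed.

(* Indices j = 1..k are represented by j : 'I_k with value j.+1 - 1. *)
Theorem lemma7p5 (R : realType) (n k : nat)
    (A : 'I_k -> {vspace 'rV[R]_n})
    (Aflag : forall i j : 'I_k, (i <= j)%N -> (A i <= A j)%VS)
    (B : {vspace 'rV[R]_n})
    (dimB : \dim B = k)
    (BOmega : forall j : 'I_k, (j.+1 <= \dim (B :&: A j))%N)
    (b : 'rV[R]_n) :
  let fiber := fun c : 'rV[R]_n =>
    forall j : 'I_k,
      affine_dim_ge (setI_pred (translate B c) (translate (A j) b)) j.+1 in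
  (* nonempty *)
  (exists c, fiber c) /\
  (* convex (as a set of representatives c of the cosets c + B) *)
  (forall (c1 c2 : 'rV[R]_n) (t : R), fiber c1 -> fiber c2 ->
     0 <= t -> t <= 1 -> fiber ((1 - t) *: c1 + t *: c2)).
Proof.
move=> fiber; split.
  by exists b => j; apply: (@key_adg _ _ _ _ _ _ (b)); rewrite ?subrr ?rpred0.
move=> c1 c2 t f1 f2 _ _ j.
have [p1 [[h1c h1b] _]] := f1 j.
have [p2 [[h2c h2b] _]] := f2 j.
apply: (@key_adg _ _ _ _ _ _ ((1 - t) *: p1 + t *: p2)) => //.
  have <- : (1 - t) *: (p1 - c1) + t *: (p2 - c2) =
            ((1 - t) *: p1 + t *: p2) - ((1 - t) *: c1 + t *: c2).
    by rewrite !scalerBr opprD addrACA.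
  by apply: rpredD; apply: rpredZ.
have <- : (1 - t) *: (p1 - b) + t *: (p2 - b) =
          ((1 - t) *: p1 + t *: p2) - b.
  by rewrite !scalerBr addrACA -opprD -scalerDl subrK scale1r.
by apply: rpredD; apply: rpredZ.
Qed.
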